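(* Let $\mathcal{H}$ be a real or complex Hilbert space and let $A$ be a finite-rank positive operator on $\mathcal{H}$ whose trace is an integer $k$. If $k\ge\operatorname{rank}(A)$, then $A$ is the sum of $k$ self-adjoint projections of rank one, i.e. there are unit vectors $x_1,\ldots,x_k\in\mathcal{H}$ with $A=\sum_{i=1}^k x_i\otimes x_i$.
   Context: For $x,y\in\mathcal{H}$, $x\otimes y$ denotes the rank-one operator $u\mapsto\langle u,y\rangle x$; if $\|x\|=1$, $x\otimes x$ is a rank-one orthogonal projection. *)

(* Defs.v *)
From mathcomp Require Import all_boot all_order all_algebra.
From mathcomp Require Import complex.
From mathcomp Require Import reals.
Set Implicit Arguments. Unset Strict Implicit. Unset Printing Implicit Defensive.
Import Order.TTheory GRing.Theory Num.Theory.
Local Open Scope ring_scope.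

Section Hilbert.
Variables (K : numFieldType) (cj : K -> K) (V : lmodType K) (ip : V -> V -> K).

Definition is_inner_product : Prop :=
  [/\ (forall (a : K) (x y z : V), ip (a *: x + y) z = a * ip x z + ip y z),
      (forall x y : V, ip x y = cj (ip y x)),
      (forall x : V, 0 <= ip x x) &
      (forall x : V, ip x x = 0 -> x = 0)].

Definition ip_complete : Prop :=
  forall u : nat -> V,
    (forall eps : K, 0 < eps -> exists N, forall m n, (N <= m)%N -> (N <= n)%N ->
         ip (u m - u n) (u m - u n) < eps) ->
    exists l : V, forall eps : K, 0 < eps -> exists N, forall n, (N <= n)%N ->
         ip (u n - l) (u n - l) < eps.

Definition is_hilbert_space : Prop := is_inner_product /\ ip_complete.

Definition bounded_op (A : V -> V) : Prop :=
  exists M : K, 0 <= M /\ forall x, ip (A x) (A x) <= M * ip x x.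

Definition positive_op (A : V -> V) : Prop :=
  (forall x y, ip (A x) y = ip x (A y)) /\ (forall x, 0 <= ip (A x) x).

Definition in_span (n : nat) (b : 'I_n -> V) (v : V) : Prop :=
  exists c : 'I_n -> K, v = \sum_(i < n) c i *: b i.

Definition lin_indep (n : nat) (b : 'I_n -> V) : Prop :=
  forall c : 'I_n -> K, \sum_(i < n) c i *: b i = 0 -> forall i, c i = 0.

Definition orthonormal (n : nat) (e : 'I_n -> V) : Prop :=
  forall i j : 'I_n, ip (e i) (e j) = (i == j)%:R.

Definition has_rank (A : V -> V) (r : nat) : Prop :=
  exists b : 'I_r -> V,
    [/\ lin_indep b, (forall i, exists u, A u = b i) & (forall u, in_span b (A u))].

Definition finite_rank (A : V -> V) : Prop := exists r, has_rank A r.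

(* trace of a finite-rank self-adjoint A: sum of <A e_i, e_i> over an
   orthonormal family e whose span contains the range of A (independent of
   the choice of such a family) *)
Definition has_trace (A : V -> V) (t : K) : Prop :=
  exists n (e : 'I_n -> V),
    [/\ orthonormal e, (forall u, in_span e (A u)) &
        \sum_(i < n) ip (A (e i)) (e i) = t].

Definition rank_one (x y : V) : V -> V := fun u => ip u y *: x.

Definition prop6_statement : Prop :=
  is_hilbert_space ->
  forall (A : {linear V -> V}) (k r : nat),
    bounded_op A -> positive_op A -> has_rank A r -> has_trace A k%:R ->
    (r <= k)%N ->
    exists x : 'I_k -> V,
      (forall i, ip (x i) (x i) = 1) /\
      forall u, A u = \sum_(i < k) rank_one (x i) (x i) u.

End Hilbert.

(* Main.v *)
Require Import Defs.
From mathcomp Require Import all_boot all_order all_algebra.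
From mathcomp Require Import complex.
From mathcomp Require Import reals.
From mathcomp Require Import ring.
Import Order.TTheory GRing.Theory Num.Theory.
Local Open Scope ring_scope.
Set Implicit Arguments. Unset Strict Implicit. Unset Printing Implicit Defensive.

Section Generic.
Variables (K : numFieldType) (cj : {rmorphism K -> K}).
Hypothesis cjK : involutive cj.
Hypothesis cj_real : forall x, x \is Num.real -> cj x = x.
Hypothesis real_cj : forall x, cj x = x -> x \is Num.real.
Hypothesis normcj : forall z, z * cj z = `|z| ^+ 2.
Hypothesis sqrtK : forall x : K, 0 <= x -> exists y, 0 <= y /\ y * y = x.
Variables (V : lmodType K) (ip : V -> V -> K).
Hypothesis hip : is_inner_product cj ip.

Lemma ipDZl a x y z : ip (a *: x + y) z = a * ip x z + ip y z.
Proof. by case: hip. Qed.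
Lemma ipC x y : ip x y = cj (ip y x).
Proof. by case: hip. Qed.
Lemma ip_ge0 x : 0 <= ip x x.
Proof. by case: hip => _ _ + _; apply. Qed.
Lemma ip_eq0 x : ip x x = 0 -> x = 0.
Proof. by case: hip => _ _ _; apply. Qed.
Lemma ip0l z : ip 0 z = 0.
Proof.
have := ipDZl 1 0 0 z; rewrite scaler0 addr0 mul1r => h.
have : ip 0 z + ip 0 z - ip 0 z = ip 0 z - ip 0 z by rewrite -h.
by rewrite addrK subrr.
Qed.
Lemma ipDl x y z : ip (x + y) z = ip x z + ip y z.
Proof. by have := ipDZl 1 x y z; rewrite scale1r mul1r. Qed.
Lemma ipZl a x z : ip (a *: x) z = a * ip x z.
Proof. by have := ipDZl a x 0 z; rewrite addr0 ip0l addr0. Qed.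
Lemma ipNl x z : ip (- x) z = - ip x z.
Proof. by rewrite -scaleN1r ipZl mulN1r. Qed.
Lemma ipBl x y z : ip (x - y) z = ip x z - ip y z.
Proof. by rewrite ipDl ipNl. Qed.
Lemma ipDr x y z : ip x (y + z) = ip x y + ip x z.
Proof. by rewrite ipC ipDl rmorphD -!ipC. Qed.
Lemma ipZr a x z : ip x (a *: z) = cj a * ip x z.
Proof. by rewrite ipC ipZl rmorphM -ipC. Qed.
Lemma ip0r z : ip z 0 = 0.
Proof. by rewrite ipC ip0l rmorph0. Qed.
Lemma ipNr x z : ip x (- z) = - ip x z.
Proof. by rewrite -scaleN1r ipZr rmorphN rmorph1 mulN1r. Qed.
Lemma ipBr x y z : ip x (y - z) = ip x y - ip x z.
Proof. by rewrite ipDr ipNr. Qed.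
Lemma ip_suml n (F : 'I_n -> V) z : ip (\sum_(i < n) F i) z = \sum_(i < n) ip (F i) z.
Proof. by elim/big_rec2: _ => [|i s1 s2 _ <-]; rewrite ?ip0l ?ipDl. Qed.
Lemma ip_sumr n (F : 'I_n -> V) z : ip z (\sum_(i < n) F i) = \sum_(i < n) ip z (F i).
Proof. by elim/big_rec2: _ => [|i s1 s2 _ <-]; rewrite ?ip0r ?ipDr. Qed.
Lemma ip_real x : ip x x \is Num.real.
Proof. exact: ger0_real (ip_ge0 x). Qed.
Lemma cj_ip x : cj (ip x x) = ip x x.
Proof. by rewrite -ipC. Qed.

Section Op.
Variable A : V -> V.
Hypothesis linA : forall a x y, A (a *: x + y) = a *: A x + A y.
Hypothesis saA : forall x y, ip (A x) y = ip x (A y).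
Hypothesis posA : forall x, 0 <= ip (A x) x.

Lemma Azero : A 0 = 0.
Proof.
have := linA 1 0 0; rewrite scaler0 addr0 scale1r => h.
have : A 0 + A 0 - A 0 = A 0 - A 0 by rewrite -h.
by rewrite addrK subrr.
Qed.
Lemma AD x y : A (x + y) = A x + A y.
Proof. by have := linA 1 x y; rewrite !scale1r. Qed.
Lemma AZ a x : A (a *: x) = a *: A x.
Proof. by have := linA a x 0; rewrite addr0 Azero addr0. Qed.
Lemma AB x y : A (x - y) = A x - A y.
Proof. by rewrite AD -scaleN1r AZ scaleN1r. Qed.

Lemma quad_exp u w a :
  ip (A (u + a *: w)) (u + a *: w) =
  ip (A u) u + cj a * ip (A u) w + a * cj (ip (A u) w) + a * cj a * ip (A w) w.
Proof.
rewrite AD AZ !ipDl !ipDr !ipZl !ipZr.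
rewrite [ip (A w) u]saA -[ip w (A u)]cjK -ipC.
ring.
Qed.
End Op.

Lemma span_lin n (b : 'I_n -> V) x y a :
  in_span b x -> in_span b y -> in_span b (x - a *: y).
Proof.
move=> [c ->] [d ->]; exists (fun i => c i - a * d i).
rewrite scaler_sumr -sumrB; apply: eq_bigr => i _.
by rewrite scalerBl scalerA.
Qed.

Lemma span_perp m (b : 'I_m.+1 -> V) x :
  ip (b ord0) (b ord0) != 0 -> in_span b x -> ip x (b ord0) = 0 ->
  in_span (fun j : 'I_m => b (lift ord0 j) -
     (ip (b (lift ord0 j)) (b ord0) / ip (b ord0) (b ord0)) *: b ord0) x.
Proof.
move=> hN [c ->]; set w := b ord0; set N := ip w w => hperp.
exists (fun j => c (lift ord0 j)).
move: hperp; rewrite ip_suml big_ord_recl ipZl -/w -/N => hperp.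
rewrite big_ord_recl.
have -> : \sum_(j < m) c (lift ord0 j) *: (b (lift ord0 j) -
     (ip (b (lift ord0 j)) w / N) *: w) =
   \sum_(j < m) c (lift ord0 j) *: b (lift ord0 j) -
   (\sum_(j < m) c (lift ord0 j) * ip (b (lift ord0 j)) w / N) *: w.
  rewrite scaler_suml -sumrB; apply: eq_bigr => j _.
  by rewrite scalerBr scalerA mulrA.
have -> : \sum_(j < m) c (lift ord0 j) * ip (b (lift ord0 j)) w / N = - c ord0.
  rewrite -mulr_suml.
  have -> : \sum_(j < m) c (lift ord0 j) * ip (b (lift ord0 j)) w = - (c ord0 * N).
    move: hperp; rewrite addrC => /eqP; rewrite addr_eq0 => /eqP <-.
    by apply: eq_bigr => j _; rewrite ipZl.
  by rewrite mulNr mulfK.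
by rewrite scaleNr opprK addrC.
Qed.

Definition vcons m (v0 : V) (v : 'I_m -> V) : 'I_m.+1 -> V :=
  fun i => if unlift ord0 i is Some j then v j else v0.
Lemma vcons0 m v0 (v : 'I_m -> V) : vcons v0 v ord0 = v0.
Proof. by rewrite /vcons unlift_none. Qed.
Lemma vconsS m v0 (v : 'I_m -> V) j : vcons v0 v (lift ord0 j) = v j.
Proof. by rewrite /vcons liftK. Qed.
Lemma sum_vcons (W : nmodType) (F : V -> W) m v0 (v : 'I_m -> V) :
  \sum_(i < m.+1) F (vcons v0 v i) = F v0 + \sum_(j < m) F (v j).
Proof.
rewrite big_ord_recl vcons0; congr (_ + _); apply: eq_bigr => j _.
by rewrite vconsS.
Qed.

Lemma chol m : forall (b : 'I_m -> V) (A : V -> V),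
  (forall a x y, A (a *: x + y) = a *: A x + A y) ->
  (forall x y, ip (A x) y = ip x (A y)) -> (forall x, 0 <= ip (A x) x) ->
  (forall u, in_span b (A u)) ->
  exists v : 'I_m -> V, (forall u, A u = \sum_(l < m) rank_one ip (v l) (v l) u)
     /\ (forall l, exists u, v l = A u).
Proof.
elim: m => [|m IH] b A linA saA posA spA.
  exists (fun _ => 0); split => [u|[]//].
  by rewrite big_ord0; case: (spA u) => c ->; rewrite big_ord0.
set w := b ord0.
have rk0 : forall u, rank_one ip 0 0 u = 0 by move=> u; rewrite /rank_one scaler0.
have finish0 : forall b'' : 'I_m -> V, (forall u, in_span b'' (A u)) ->
  exists v : 'I_m.+1 -> V, (forall u, A u = \sum_(l < m.+1) rank_one ip (v l) (v l) u)
     /\ (forall l, exists u, v l = A u).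
  move=> b'' hb''; have [v' [hv hr]] := IH b'' A linA saA posA hb''.
  exists (vcons 0 v'); split.
    by move=> u; rewrite (@sum_vcons V (fun z => rank_one ip z z u) m 0 v') rk0 add0r.
  move=> l; case: (unliftP ord0 l) => [j ->|->].
    by rewrite vconsS; exact: hr.
  by exists 0; rewrite vcons0 (Azero linA).
case: (eqVneq w 0) => [w0|wn0].
  apply: (finish0 (fun j => b (lift ord0 j))) => u.
  case: (spA u) => c ->; exists (fun j => c (lift ord0 j)).
  by rewrite big_ord_recl -/w w0 scaler0 add0r.
have hN : ip w w != 0 by apply/eqP => /ip_eq0 h; rewrite h eqxx in wn0.
pose b' := fun j : 'I_m => b (lift ord0 j) - (ip (b (lift ord0 j)) w / ip w w) *: w.
set c := ip (A w) w.
have cge0 : 0 <= c := posA w.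
have cjc : cj c = c by apply: cj_real; exact: ger0_real.
case: (eqVneq c 0) => [c0|cn0].
  have perp : forall u, ip (A u) w = 0.
    move=> u; apply/eqP; apply/negP => /negP zn0.
    set z := ip (A u) w in zn0; set p := ip (A u) u.
    have pge0 : 0 <= p := posA u.
    have hzz : 0 < z * cj z by rewrite normcj exprn_gt0 // normr_gt0.
    pose t := (p + 1) / (z * cj z).
    have ct : cj t = t.
      apply: cj_real; rewrite /t; apply: rpredM; first by apply: rpredD;
        [exact: ger0_real | exact: rpred1].
      by rewrite realV; exact: gtr0_real.
    have htz : t * (z * cj z) = p + 1 by rewrite /t divfK // gt_eqF.
    have := posA (u + (- (t * z)) *: w).
    rewrite (quad_exp linA saA) -/c c0 mulr0 addr0 rmorphN rmorphM ct -/z -/p.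
    have -> : p + - (t * cj z) * z + - (t * z) * cj z = p - 2 * (t * (z * cj z)) by ring.
    rewrite htz.
    have : 0 < p + 2 by rewrite (le_lt_trans pge0) // ltrDl ltr0n.
    move=> h1 h2.
    have : p - 2 * (p + 1) = - (p + 2) by ring.
    move=> e; move: h2; rewrite e oppr_ge0 => h2.
    by move: (lt_le_trans h1 h2); rewrite ltxx.
  apply: (finish0 b') => u; apply: span_perp => //.
have cgt0 : 0 < c by rewrite lt_def cn0.
have [s [sge0 ss]] := sqrtK cge0.
have sn0 : s != 0 by apply/eqP => s0; rewrite -ss s0 mulr0 eqxx in cn0.
have cs : cj s = s by apply: cj_real; exact: ger0_real.
pose A' := fun u => A u - (ip u (A w) / c) *: A w.
have linA' : forall a x y, A' (a *: x + y) = a *: A' x + A' y.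
  move=> a x y; rewrite /A' linA ipDZl.
  rewrite mulrDl scalerDl opprD scalerBr scalerA !mulrA.
  by rewrite addrACA.
have saA' : forall x y, ip (A' x) y = ip x (A' y).
  move=> x y; rewrite /A' ipBl ipBr ipZl ipZr saA rmorphM fmorphV cjc -ipC.
  by rewrite [ip (A w) y]saA; ring.
have posA' : forall x, 0 <= ip (A' x) x.
  move=> x; have := posA (x + (- (ip x (A w) / c)) *: w).
  rewrite (quad_exp linA saA) -/c.
  suff -> : ip (A' x) x = ip (A x) x + cj (- (ip x (A w) / c)) * ip (A x) w +
     - (ip x (A w) / c) * cj (ip (A x) w) +
     - (ip x (A w) / c) * cj (- (ip x (A w) / c)) * c by [].
  rewrite /A' ipBl ipZl rmorphN rmorphM fmorphV cjc [ip (A w) x]saA.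
  rewrite [ip (A x) w]saA -[ip w (A x)]cjK -ipC.
  rewrite [ip (A x) w]saA; set z := ip x (A w); set cz := cj z; set p := ip (A x) x.
  rewrite mulrNN.
  have -> : z / c * (cz / c) * c = z / c * cz by rewrite -[_ * c]mulrA divfK.
  set ic := c^-1; ring.
have spA' : forall u, in_span b' (A' u).
  move=> u; apply: span_perp => //.
    by rewrite /A'; apply: span_lin.
  rewrite -/w /A' ipBl ipZl -/c saA divfK //. by rewrite subrr.
have [v' [hv hr]] := IH b' A' linA' saA' posA' spA'.
exists (vcons (s^-1 *: A w) v'); split.
  move=> u; rewrite (@sum_vcons V (fun z => rank_one ip z z u) m _ v') -hv.
  rewrite /A' /rank_one ipZr scalerA fmorphV cs.
  have -> : s^-1 * ip u (A w) * s^-1 = ip u (A w) / c.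
    by rewrite -ss invfM; ring.
  by rewrite addrC subrK.
move=> l; case: (unliftP ord0 l) => [j ->|->].
  rewrite vconsS; case: (hr j) => u0 ->.
  by exists (u0 - (ip u0 (A w) / c) *: w); rewrite (AB linA) (AZ linA).
by exists (s^-1 *: w); rewrite vcons0 (AZ linA).
Qed.

Lemma ip_comb X Y a b :
  ip (X *: a + Y *: b) (X *: a + Y *: b) =
  X * cj X * ip a a + X * cj Y * ip a b + Y * cj X * ip b a + Y * cj Y * ip b b.
Proof. rewrite !ipDl !ipDr !ipZl !ipZr; ring. Qed.

Lemma rk_comb X Y a b u :
  rank_one ip (X *: a + Y *: b) (X *: a + Y *: b) u =
  ((cj X * ip u a + cj Y * ip u b) * X) *: a + ((cj X * ip u a + cj Y * ip u b) * Y) *: b.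
Proof. by rewrite /rank_one ipDr !ipZr scalerDr !scalerA. Qed.

Lemma sq_ge0 (q : K) : q \is Num.real -> 0 <= q * q.
Proof. by move=> qr; rewrite -expr2 -real_normK // exprn_ge0. Qed.

Lemma rotate (a b : V) : 1 < ip a a -> ip b b < 1 ->
  exists a' b', [/\ ip a' a' = 1, ip a' a' + ip b' b' = ip a a + ip b b &
    forall u, rank_one ip a' a' u + rank_one ip b' b' u =
              rank_one ip a a u + rank_one ip b b u].
Proof.
move=> ha hb.
have qr : ip a b + ip b a \is Num.real.
  by apply: real_cj; rewrite rmorphD -!ipC addrC.
set al := ip a a in ha *; set ga := ip b b in hb *; set q := ip a b + ip b a in qr *.
have alr : al \is Num.real by exact: ip_real.
have gar : ga \is Num.real by exact: ip_real.
have h1 : 0 < al - 1 by rewrite subr_gt0.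
have h2 : ga - 1 < 0 by rewrite subr_lt0.
pose D := q * q - 4%:R * ((al - 1) * (ga - 1)).
have Dge0 : 0 <= D.
  apply: addr_ge0; first exact: sq_ge0.
  rewrite oppr_ge0; apply: ltW.
  by rewrite pmulr_rlt0 ?ltr0n // pmulr_rlt0.
have [sd [sdge0 hsd]] := sqrtK Dge0.
have sdr : sd \is Num.real by exact: ger0_real.
have al1 : al - 1 != 0 by rewrite gt_eqF.
pose t := (sd - q) / (2%:R * (al - 1)).
have ht : t * t * (al - 1) + t * q + (ga - 1) = 0.
  have -> : t * t * (al - 1) + t * q + (ga - 1) = (sd * sd - D) / (4%:R * (al - 1)).
    rewrite /t /D; field.
    exact: al1.
  by rewrite (_ : sd * sd = D) // subrr mul0r.
have tr : t \is Num.real.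
  rewrite /t; apply: rpredM; first exact: rpredB.
  by rewrite realV; apply: rpredM; [exact: rpred_nat | apply: rpredB => //; exact: rpred1].
have ct : cj t = t by apply: cj_real.
have tt0 : 0 <= 1 + t * t by apply: addr_ge0; [exact: ler01 | exact: sq_ge0].
have [r [rge0 hr]] := sqrtK tt0.
have rn0 : r != 0.
  apply/eqP => r0; move: hr; rewrite r0 mulr0 => /eqP; rewrite eq_sym.
  by rewrite gt_eqF // ltr_pwDl // sq_ge0.
pose d := r^-1.
have cd : cj d = d by apply: cj_real; rewrite /d realV; exact: ger0_real.
have hd : d * d * (1 + t * t) = 1 by rewrite -hr /d; field.
exists ((d * t) *: a + d *: b), (d *: a + (- (d * t)) *: b); split.
- rewrite ip_comb rmorphM cd ct -/al -/ga.
  transitivity (d * d * (1 + t * t) + d * d * (t * t * (al - 1) + t * q + (ga - 1))).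
    by rewrite /q; ring.
  by rewrite ht hd mulr0 addr0.
- rewrite !ip_comb rmorphN rmorphM cd ct -/al -/ga.
  transitivity (d * d * (1 + t * t) * (al + ga)); first by ring.
  by rewrite hd mul1r.
- move=> u; rewrite !rk_comb rmorphN rmorphM cd ct addrACA -!scalerDl /rank_one.
  congr (_ *: _ + _ *: _).
    transitivity (ip u a * (d * d * (1 + t * t))); first by ring.
    by rewrite hd mulr1.
  transitivity (ip u b * (d * d * (1 + t * t))); first by ring.
  by rewrite hd mulr1.
Qed.

Lemma sum_swap2 (W : nmodType) (F : V -> W) k (y : 'I_k -> V) i j a' b' :
  i != j -> F a' + F b' = F (y i) + F (y j) ->
  \sum_(l < k) F (if l == i then a' else if l == j then b' else y l) =
  \sum_(l < k) F (y l).
Proof.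
move=> ij h; have ji : j != i by rewrite eq_sym.
rewrite [LHS](bigD1 i) // [RHS](bigD1 i) //=.
rewrite [X in _ + X = _](bigD1 j) ?ji //= [X in _ = _ + X](bigD1 j) ?ji //=.
rewrite eqxx (negPf ji) eqxx !addrA h; congr (_ + _).
apply: eq_bigr => l /andP [li lj]; by rewrite (negPf li) (negPf lj).
Qed.

Lemma balance k n : forall (y : 'I_k -> V),
  (#|[set i | ip (y i) (y i) != 1%R]| <= n)%N ->
  \sum_(i < k) ip (y i) (y i) = k%:R ->
  exists x : 'I_k -> V, (forall i, ip (x i) (x i) = 1) /\
    forall u, \sum_(i < k) rank_one ip (y i) (y i) u =
              \sum_(i < k) rank_one ip (x i) (x i) u.
Proof.
elim: n => [|n IH] y hc hs.
  exists y; split => // i; move: hc; rewrite leqn0 cards_eq0 => /eqP S0.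
  have : i \notin [set i | ip (y i) (y i) != 1] by rewrite S0 inE.
  by rewrite inE negbK => /eqP.
set S := [set i | ip (y i) (y i) != 1] in hc.
case: (set_0Vmem S) => [S0|[i0 hi0]].
  exists y; split => // i.
  have : i \notin S by rewrite S0 inE.
  by rewrite inE negbK => /eqP.
have hr : forall l, ip (y l) (y l) \is Num.real by move=> l; exact: ip_real.
have hi0' : ip (y i0) (y i0) != 1 by move: hi0; rewrite inE.
have [i hi] : exists i, 1 < ip (y i) (y i).
  case: (boolP [exists i, 1 < ip (y i) (y i)]) => [/existsP //| /existsPn hall].
  have hle : forall l, ip (y l) (y l) <= 1.
    by move=> l; rewrite real_leNgt ?hr ?rpred1 // hall.
  have hlt : ip (y i0) (y i0) < 1 by rewrite lt_def eq_sym hi0' hle.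
  have : \sum_(l < k) ip (y l) (y l) < \sum_(l < k) (1 : K).
    rewrite (bigD1 i0) //= [X in _ < X](bigD1 i0) //=.
    by apply: ltr_leD => //; apply: ler_sum => l _.
  by rewrite sumr_const card_ord hs ltxx.
have [j hj] : exists j, ip (y j) (y j) < 1.
  case: (boolP [exists j, ip (y j) (y j) < 1]) => [/existsP //| /existsPn hall].
  have hle : forall l, 1 <= ip (y l) (y l).
    by move=> l; rewrite real_leNgt ?hr ?rpred1 // hall.
  have hlt : 1 < ip (y i0) (y i0) by rewrite lt_def hi0' hle.
  have : \sum_(l < k) (1 : K) < \sum_(l < k) ip (y l) (y l).
    rewrite (bigD1 i0) //= [X in _ < X](bigD1 i0) //=.
    by apply: ltr_leD => //; apply: ler_sum => l _.
  by rewrite sumr_const card_ord hs ltxx.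
have ij : i != j.
  by apply/eqP => e; rewrite e in hi; have := lt_trans hi hj; rewrite ltxx.
have [a' [b' [ha' hsum hrk]]] := rotate hi hj.
pose y' := fun l => if l == i then a' else if l == j then b' else y l.
have hiS : i \in S by rewrite inE gt_eqF.
have hc' : (#|[set l | ip (y' l) (y' l) != 1%R]| <= n)%N.
  have sub : [set l | ip (y' l) (y' l) != 1] \subset S :\ i.
    apply/subsetP => l; rewrite !inE /y'.
    case: (eqVneq l i) => [->|li]; first by rewrite ha' eqxx.
    case: (eqVneq l j) => [->|lj] //= _.
    by rewrite lt_eqF.
  apply: leq_trans (subset_leq_card sub) _.
  by move: hc; rewrite (cardsD1 i S) hiS.
have hs' : \sum_(l < k) ip (y' l) (y' l) = k%:R.
  by rewrite /y' (@sum_swap2 K (fun v => ip v v) k y i j a' b' ij hsum).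
have [x [hx hxr]] := IH y' hc' hs'.
exists x; split => // u.
rewrite -hxr /y'.
by rewrite (@sum_swap2 V (fun v => rank_one ip v v u) k y i j a' b' ij (hrk u)).
Qed.

Lemma main_gen : prop6_statement cj ip.
Proof.
move=> _ A k r _ [saA posA] [b [_ _ spb]] [n [e [orth spe htr]]] rk.
have linA : forall a x y, A (a *: x + y) = a *: A x + A y.
  by move=> a x y; rewrite linearP.
have [v [hv hvr]] := chol linA saA posA spb.
have hvs : \sum_(l < r) ip (v l) (v l) = k%:R.
  rewrite -htr.
  under [RHS]eq_bigr do rewrite hv ip_suml.
  rewrite exchange_big /=; apply: eq_bigr => l _.
  case: (hvr l) => u hu; case: (spe u) => c hc.
  have hc' : forall i, ip (v l) (e i) = c i.
    move=> i; rewrite hu hc ip_suml (bigD1 i) //= ipZl orth eqxx mulr1.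
    rewrite big1 ?addr0 // => j ji.
    by rewrite ipZl orth (negPf ji) mulr0.
  rewrite {1}hu {1}hc ip_suml; apply: eq_bigr => i _.
  by rewrite /rank_one !ipZl hc' mulrC.
pose vn := fun m : nat => match (insub m : option 'I_r) with Some j => v j | None => 0 end.
have pad : forall (W : nmodType) (F : V -> W), F 0 = 0 ->
    \sum_(i < k) F (vn i) = \sum_(l < r) F (v l).
  move=> W F F0.
  have -> : \sum_(l < r) F (v l) = \sum_(l < r) F (vn l).
    by apply: eq_bigr => l _; rewrite /vn valK.
  rewrite (big_ord_widen k (fun m => F (vn m)) rk) [RHS]big_mkcond /=.
  apply: eq_bigr => i _; case: ifP => // /negbT h.
  by rewrite /vn insubN.
have hsy : \sum_(i < k) ip (vn i) (vn i) = k%:R.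
  by rewrite (pad K (fun z => ip z z)) ?ip0l.
have hck : (#|[set i : 'I_k | ip (vn i) (vn i) != 1%R]| <= k)%N.
  exact: (leq_trans (max_card _) (eq_leq (card_ord k))).
have [x [hx hxr]] := balance hck hsy.
exists x; split => // u.
rewrite hv -hxr (pad V (fun z => rank_one ip z z u)) //.
by rewrite /rank_one scaler0.
Qed.

End Generic.

Theorem proposition6 :
  (forall (R : realType) (V : lmodType R) (ip : V -> V -> R),
      prop6_statement (fun z : R => z) ip) /\
  (forall (R : realType) (V : lmodType R[i]) (ip : V -> V -> R[i]),
      prop6_statement (fun z : R[i] => Num.conj z) ip).
Proof.
split.
  move=> R V ip H.
  apply: (@main_gen R idfun _ _ _ _ _ V ip H.1 H) => //.
  - by move=> x _; exact: num_real.
  - by move=> z; rewrite /= -expr2 real_normK ?num_real.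
  - move=> x hx; exists (Num.sqrt x); split; first exact: sqrtr_ge0.
    by rewrite -expr2 sqr_sqrtr.
move=> R V ip H.
apply: (@main_gen R[i] Num.conj _ _ _ _ _ V ip H.1 H).
- exact: conjCK.
- exact: conj_Creal.
- by move=> x hx; rewrite CrealE; apply/eqP.
- by move=> z; rewrite normCK.
- move=> x hx; exists (sqrtC x); split; first by rewrite sqrtC_ge0.
  by rewrite -expr2 sqrtCK.
Qed.
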